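(* Define integers $\lambda_r$ for $r\ge 1$ by $\lambda_1=1$ and $\lambda_r = 2\left(3^{\lceil r/2 \rceil}+1\right)\lambda_{\lceil r/2 \rceil}$ for $r \ge 2$. Then for every integer $r \ge 1$, $g(3^r,3) \le \lambda_r$.
   Context: For integers $2\le k\le n$, let $S_n$ denote the set of permutations of $[n]=\{1,\dots,n\}$ (written as sequences), and $S_{n,k}$ the set of all sequences of $k$ distinct elements of $[n]$. A sequence $\kappa\in S_{n,k}$ is a subsequence of a permutation $\pi\in S_n$ if its elements appear in $\pi$ in the same relative order as in $\kappa$. A perfect sequence covering array ${\rm PSCA}(n,k)$ with multiplicity $\lambda$ (a positive integer) is a multiset $X$ of elements of $S_n$ such that every $\kappa\in S_{n,k}$ is a subsequence of exactly $\lambda$ elements of $X$ (counted with multiplicity); such an $X$ has size $\lambda k!$. $g(n,k)$ denotes the smallest $\lambda$ for which a ${\rm PSCA}(n,k)$ with multiplicity $\lambda$ exists. *)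

(* Defs.v *)
From mathcomp Require Import all_boot all_order all_fingroup.
Set Implicit Arguments. Unset Strict Implicit. Unset Printing Implicit Defensive.

(* A permutation pi of [n] (here [n] is modelled by 'I_n = {0,..,n-1}),
   written as the sequence (pi 0, pi 1, ..., pi (n-1)). *)
Definition perm_word (n : nat) (pi : 'S_n) : seq 'I_n := [seq pi i | i : 'I_n].

Definition is_subseq_of (n k : nat) (kappa : k.-tuple 'I_n) (pi : 'S_n) : bool :=
  subseq kappa (perm_word pi).

(* X (a multiset of permutations, given as a list) is a PSCA(n,k) with
   multiplicity lam: lam is a positive integer and every kappa in S_{n,k}
   is a subsequence of exactly lam elements of X, counted with multiplicity. *)
Definition is_PSCA (n k lam : nat) (X : seq 'S_n) : Prop :=
  0 < lam /\
  forall kappa : k.-tuple 'I_n, uniq kappa ->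
    seq.count (fun pi : 'S_n => is_subseq_of kappa pi) X = lam.

Definition PSCA_exists (n k lam : nat) : Prop := exists X : seq 'S_n, @is_PSCA n k lam X.

(* g(n,k) <= m, with g(n,k) the smallest lam admitting a PSCA(n,k) of
   multiplicity lam: unfolded, there is such a lam with lam <= m. *)
Definition g_le (n k m : nat) : Prop := exists lam, lam <= m /\ PSCA_exists n k lam.

(* lambda_1 = 1, lambda_r = 2 (3^ceil(r/2) + 1) lambda_ceil(r/2) for r >= 2.
   ceil(r/2) = uphalf r. Defined via fuel; fuel r suffices since
   uphalf r < r for r >= 2. *)
Fixpoint lam_aux (fuel r : nat) : nat :=
  match fuel with
  | 0 => 1
  | f.+1 => if r <= 1 then 1 else 2 * (3 ^ uphalf r + 1) * lam_aux f (uphalf r)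
  end.

Definition lambda_seq (r : nat) : nat := lam_aux r r.

Lemma lambda_seq_1 : lambda_seq 1 = 1. Proof. by []. Qed.
Lemma lambda_seq_2 : lambda_seq 2 = 8. Proof. by []. Qed.
Lemma lambda_seq_3 : lambda_seq 3 = 160. Proof. by []. Qed.
Lemma lambda_seq_4 : lambda_seq 4 = 2 * (9 + 1) * 8. Proof. by []. Qed.

(* Main.v *)
Require Import Defs.
From mathcomp Require Import all_boot all_order all_fingroup.
From mathcomp Require Import all_algebra all_field.
From mathcomp Require Import ring zify.
Set Implicit Arguments. Unset Strict Implicit. Unset Printing Implicit Defensive.
Import GRing.Theory.

Lemma subseq2 (T : eqType) (s : seq T) b c : uniq s -> b != c ->
  subseq [:: b; c] s = [&& b \in s, c \in s & index b s < index c s].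
Proof.
elim: s => [|y s IH] //= /andP[ys us] bc.
rewrite !inE; case: (eqVneq b y) => [by_|by_] /=.
  subst b; rewrite sub1seq (negPf bc) /= andbT; move: bc; rewrite eq_sym => /negPf -> //.
rewrite IH // (eq_sym y c); case: (eqVneq c y) => [cy|cy] /=.
  by subst c; rewrite (negPf ys) !andbF.
by rewrite ltnS.
Qed.

Lemma subseq3 (T : eqType) (s : seq T) a b c : uniq s -> a != b -> b != c -> a != c ->
  subseq [:: a; b; c] s =
  [&& a \in s, b \in s, c \in s, index a s < index b s & index b s < index c s].
Proof.
elim: s => [|y s IH] //= /andP[ys us] ab bc ac.
rewrite !inE (eq_sym y a) (eq_sym y b) (eq_sym y c); case: (eqVneq a y) => [ay|ay] /=.
  subst a; rewrite subseq2 //.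
  have by_ : (b == y) = false by apply/negbTE; rewrite eq_sym.
  have cy : (c == y) = false by apply/negbTE; rewrite eq_sym.
  by rewrite by_ cy /= ltnS.
rewrite IH //; case: (eqVneq b y) => [by_|by_] /=.
  by subst b; rewrite (negPf ys) !andbF.
case: (eqVneq c y) => [cy|cy] /=.
  by subst c; rewrite (negPf ys) !andbF.
by rewrite !ltnS.
Qed.

Definition lt3 (T : finType) (f : {ffun T -> nat}) (a b c : T) :=
  (f a < f b) && (f b < f c).

Definition psca (T : finType) (lam : nat) (Xs : seq {ffun T -> nat}) : Prop :=
  [/\ 0 < lam, (forall f, f \in Xs -> injective f) &
   forall a b c : T, a != b -> b != c -> a != c ->
     count (fun f => lt3 f a b c) Xs = lam].

Lemma word_subseq n (pi : 'S_n) (a b c : 'I_n) : a != b -> b != c -> a != c ->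
  subseq [:: a; b; c] (perm_word pi) =
  ((pi^-1)%g a < (pi^-1)%g b) && ((pi^-1)%g b < (pi^-1)%g c).
Proof.
move=> ab bc ac.
have uw : uniq (perm_word pi) by rewrite /perm_word map_inj_uniq ?enum_uniq //; apply: perm_inj.
have mw x : x \in perm_word pi.
  by rewrite /perm_word -(permKV pi x) map_f // mem_enum.
have iw x : index x (perm_word pi) = (pi^-1)%g x.
  by rewrite /perm_word -{1}(permKV pi x) index_map ?index_enum_ord //; apply: perm_inj.
by rewrite subseq3 // !mw !iw.
Qed.

Section Rank.
Variables (n : nat) (f : 'I_n -> nat).
Hypothesis finj : injective f.

Definition rk (i : 'I_n) := #|[set j | f j < f i]|.

Lemma rk_lt i j : (rk i < rk j) = (f i < f j).
Proof.
apply/idP/idP.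
  move=> h; case: (ltngtP (f i) (f j)) => // [hl|he].
    suff : rk j < rk i by rewrite ltnNge (ltnW h).
    apply: proper_card; apply/properP; split.
      by apply/subsetP => k; rewrite !inE => /ltn_trans; apply.
    by exists j; rewrite !inE ?ltnn.
  by move: h; rewrite (finj he) ltnn.
move=> h; apply: proper_card; apply/properP; split.
  by apply/subsetP => k; rewrite !inE => /ltn_trans; apply.
by exists i; rewrite !inE ?ltnn.
Qed.

Lemma rk_bound i : rk i < n.
Proof.
rewrite -[n in _ < n]card_ord; apply: proper_card; apply/properP; split.
  by apply/subsetP.
by exists i; rewrite ?inE ?ltnn.
Qed.

Definition rko i : 'I_n := Ordinal (rk_bound i).

Lemma rko_inj : injective rko.
Proof.
move=> i j /(congr1 val) /= e.
case: (ltngtP (f i) (f j)) => [h|h|h]; last by apply: finj.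
  by move: h; rewrite -rk_lt e ltnn.
by move: h; rewrite -rk_lt e ltnn.
Qed.

Definition pi_of : 'S_n := ((perm rko_inj)^-1)%g.

Lemma pi_ofE a b c : a != b -> b != c -> a != c ->
  subseq [:: a; b; c] (perm_word pi_of) = (f a < f b) && (f b < f c).
Proof.
move=> ab bc ac; rewrite word_subseq // /pi_of invgK !permE /=.
by rewrite !rk_lt.
Qed.
End Rank.

Lemma psca_inj (T T' : finType) (g : T' -> T) lam Xs : injective g -> psca lam Xs ->
  psca lam (map (fun f : {ffun T -> nat} => [ffun t => f (g t)]) Xs).
Proof.
move=> ginj [l0 Xinj Xc]; split => //.
  move=> h /mapP [f fX ->] x y; rewrite !ffunE => /Xinj; move/(_ fX) => /ginj //.
move=> a b c ab bc ac; rewrite count_map -(Xc (g a) (g b) (g c)); last first.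
- by rewrite (inj_eq ginj).
- by rewrite (inj_eq ginj).
- by rewrite (inj_eq ginj).
by apply: eq_count => f; rewrite /lt3 /= !ffunE.
Qed.

Definition fixf n (f : {ffun 'I_n -> nat}) : {ffun 'I_n -> nat} :=
  if injectiveb f then f else [ffun i => nat_of_ord i].

Lemma fixf_inj n f : injective (@fixf n f).
Proof.
rewrite /fixf; case: (injectiveP f) => // _ i j; rewrite !ffunE; apply: val_inj.
Qed.

Lemma psca_final n lam (Xs : seq {ffun 'I_n -> nat}) : psca lam Xs -> PSCA_exists n 3 lam.
Proof.
case=> l0 Xinj Xc.
exists (map (fun f => pi_of (@fixf_inj n f)) Xs).
split => // kappa ukap.
case: kappa ukap => [[|a [|b [|c [|? ?]]]] //= sz].
rewrite /= !inE negb_or andbT => /andP[/andP[ab ac] bc].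
rewrite count_map -(Xc a b c ab bc ac); apply: eq_in_count => f fX /=.
rewrite /is_subseq_of /= pi_ofE //.
by rewrite /fixf; case: (injectiveP f) => // /(_ (Xinj f fX)).
Qed.

Lemma lex_lt M w1 w2 u v : u < M -> v < M ->
  (w1 * M + u < w2 * M + v) = (w1 < w2) || (w1 == w2) && (u < v).
Proof.
move=> uM vM; case: (ltngtP w1 w2) => [h|h|->] /=; last by rewrite ltn_add2l.
  apply/idP; apply: (@leq_trans (w1.+1 * M)); first by rewrite mulSn [X in _ < X]addnC ltn_add2l.
  by apply: leq_trans (leq_addr _ _); rewrite leq_mul2r h orbT.
apply/negbTE; rewrite -leqNgt; apply: (@leq_trans (w2.+1 * M)); first by apply: ltnW; rewrite mulSn [X in _ < X]addnC ltn_add2l.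
by apply: leq_trans (leq_addr _ _); rewrite leq_mul2r h orbT.
Qed.

Lemma lex_eq M w1 w2 u v : u < M -> v < M ->
  w1 * M + u = w2 * M + v -> w1 = w2 /\ u = v.
Proof.
move=> uM vM e.
have h1 := lex_lt w1 w2 uM vM; have h2 := lex_lt w2 w1 vM uM.
rewrite e ltnn in h1; rewrite e ltnn in h2.
case: (ltngtP w1 w2) h1 h2 => //= eqw _; split=> //; move: e; by rewrite eqw => /addnI.
Qed.

Lemma count_cons_sum (T : Type) x (s : seq T) (ps : seq (pred T)) :
  sumn [seq count p (x :: s) | p <- ps] =
  sumn [seq nat_of_bool (p x) | p <- ps] + sumn [seq count p s | p <- ps].
Proof. elim: ps => //= p ps ->; rewrite addnACA. by []. Qed.

Lemma count_lin (T : eqType) (s : seq T) (ps qs : seq (pred T)) :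
  (forall x, x \in s -> sumn [seq nat_of_bool (p x) | p <- ps] = sumn [seq nat_of_bool (q x) | q <- qs]) ->
  sumn [seq count p s | p <- ps] = sumn [seq count q s | q <- qs].
Proof.
elim: s => [|x s IH] H.
  have z : forall rs : seq (pred T), sumn [seq count r [::] | r <- rs] = 0 by elim.
  by rewrite !z.
rewrite !count_cons_sum H ?mem_head //; congr (_ + _); apply: IH => y ys.
by apply: H; rewrite inE ys orbT.
Qed.

Section Plane.
Variables (F : finFieldType) (lam : nat) (Xs : seq {ffun F -> nat}).
Hypothesis HX : psca lam Xs.
Hypothesis F3 : 3 <= #|F|.

Definition lab (d : option F) (p : F * F) : F :=
  match d with Some k => (p.2 - k * p.1)%R | None => p.1 end.
Definition pos (d : option F) (p : F * F) : F :=
  match d with Some _ => p.1 | None => p.2 end.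

Lemma labpos_inj d p q : lab d p = lab d q -> pos d p = pos d q -> p = q.
Proof.
case: d p q => [k|] [p1 p2] [q1 q2] /= e1 e2; last by rewrite e1 e2.
subst q1; congr pair; move/eqP: e1; rewrite -subr_eq0 opprB addrA subrK subr_eq0.
by move/eqP.
Qed.

Definition mx (h : {ffun F -> nat}) := \max_(t : F) h t.

Lemma le_mx (h : {ffun F -> nat}) (t : F) : h t <= mx h.
Proof. exact: (leq_bigmax t). Qed.

Definition cmp (b : bool) (h : {ffun F -> nat}) (t : F) :=
  if b then mx h - h t else h t.

Definition mk (d : option F) (h : {ffun F -> nat}) (b : bool) : {ffun F * F -> nat} :=
  [ffun p => h (lab d p) * (mx h).+1 + cmp b h (pos d p)].

Lemma cmp_lt b (h : {ffun F -> nat}) (t : F) : cmp b h t < (mx h).+1.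
Proof. by rewrite /cmp; case: b; rewrite ltnS ?leq_subr ?le_mx. Qed.

Lemma mk_lt d (h : {ffun F -> nat}) b p q : injective h ->
  (mk d h b p < mk d h b q) =
  (h (lab d p) < h (lab d q)) || (lab d p == lab d q) &&
     (if b then h (pos d q) < h (pos d p) else h (pos d p) < h (pos d q)).
Proof.
move=> hi; rewrite !ffunE lex_lt ?cmp_lt // (inj_eq hi); congr (_ || (_ && _)).
rewrite /cmp; case: b => //.
have := le_mx h (pos d p); have := le_mx h (pos d q); lia.
Qed.

Lemma mk_inj d (h : {ffun F -> nat}) b : injective h -> injective (mk d h b).
Proof.
move=> hi p q; rewrite !ffunE => /(lex_eq (cmp_lt _ _ _) (cmp_lt _ _ _)) [/hi e1 e2].
apply: (@labpos_inj d) => //; apply: hi; move: e2; rewrite /cmp; case: b => //.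
have := le_mx h (pos d p); have := le_mx h (pos d q); lia.
Qed.

Lemma geo p q : p != q -> exists d0, forall d, (lab d p == lab d q) = (d == d0).
Proof.
case: p q => [p1 p2] [q1 q2] pq; case: (eqVneq p1 q1) => e.
  subst q1; exists None => -[k|] //=; last by rewrite eqxx.
  by apply/negbTE; apply: contraNneq pq => /addIr ->.
have de : (p1 - q1 != 0)%R by rewrite subr_eq0.
exists (Some ((p2 - q2) / (p1 - q1))%R) => -[k|] /=; last by rewrite (negPf e).
apply/eqP/eqP => [e1|[->]].
  congr Some; have -> : (p2 - q2 = (p2 - k * p1) - (q2 - k * q1) + k * (p1 - q1))%R by ring.
  by rewrite e1 subrr add0r mulfK.
apply/eqP; rewrite -subr_eq0.
have -> : ((p2 - (p2 - q2) / (p1 - q1) * p1) - (q2 - (p2 - q2) / (p1 - q1) * q1) =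
   (p2 - q2) - (p2 - q2) / (p1 - q1) * (p1 - q1))%R by ring.
by rewrite divfK // subrr.
Qed.

Lemma nat3 (x y z : nat) : x != y -> y != z -> x != z ->
  nat_of_bool (x < y) = (z < x) && (x < y) + (x < z) && (z < y) + (x < y) && (y < z).
Proof.
case: (ltngtP x y); case: (ltngtP y z); case: (ltngtP x z) => //= *; lia.
Qed.

Lemma nat2 (A : bool) (x y : nat) : x != y -> A && (x < y) + A && (y < x) = A.
Proof. by case: A; case: (ltngtP x y). Qed.

Lemma nat2' (A : bool) (x y : nat) : x != y -> (x < y) && A + (y < x) && A = A.
Proof. by case: A; case: (ltngtP x y). Qed.

Let l0 : 0 < lam. Proof. by case: HX. Qed.
Let Xinj : forall f, f \in Xs -> injective f. Proof. by case: HX. Qed.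
Let Xc : forall a b c : F, a != b -> b != c -> a != c ->
     count (fun f => lt3 f a b c) Xs = lam. Proof. by case: HX. Qed.

Lemma cnt_eq2 (p0 p1 q : pred {ffun F -> nat}) :
  (forall h, h \in Xs -> injective h -> p0 h + p1 h = q h :> nat) ->
  count p0 Xs + count p1 Xs = count q Xs.
Proof.
move=> H; have := @count_lin _ Xs [:: p0; p1] [:: q]; rewrite /= !addn0; apply.
by move=> h hX /=; rewrite !addn0 H //; apply: Xinj.
Qed.

Lemma cnt_eq3 (p q0 q1 q2 : pred {ffun F -> nat}) :
  (forall h, h \in Xs -> injective h -> p h = q0 h + q1 h + q2 h :> nat) ->
  count p Xs = count q0 Xs + count q1 Xs + count q2 Xs.
Proof.
move=> H; have := @count_lin _ Xs [:: p] [:: q0; q1; q2]; rewrite /= !addn0 addnA; apply.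
by move=> h hX /=; rewrite !addn0 addnA H //; apply: Xinj.
Qed.

Lemma cnt_eq22 (p0 p1 q0 q1 : pred {ffun F -> nat}) :
  (forall h, h \in Xs -> injective h -> p0 h + p1 h = q0 h + q1 h :> nat) ->
  count p0 Xs + count p1 Xs = count q0 Xs + count q1 Xs.
Proof.
move=> H; have := @count_lin _ Xs [:: p0; p1] [:: q0; q1]; rewrite /= !addn0; apply.
by move=> h hX /=; rewrite !addn0 H //; apply: Xinj.
Qed.

Lemma cnt2 i j : i != j -> count (fun h : {ffun F -> nat} => h i < h j) Xs = 3 * lam.
Proof.
move=> ij.
case/boolP: [exists k, (k != i) && (k != j)] => [/existsP [k /andP[ki kj]] | /existsPn nk]; last first.
  exfalso; have : #|F| <= #|[set i; j]|.
    rewrite -cardsT; apply: subset_leq_card; apply/subsetP => k _.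
    by move: (nk k); rewrite !inE negb_and !negbK.
  by rewrite cards2 ij; move: F3; lia.
rewrite (@cnt_eq3 _ (fun h => lt3 h k i j) (fun h => lt3 h i k j) (fun h => lt3 h i j k)).
  rewrite !Xc //; [lia| by rewrite eq_sym | by rewrite eq_sym | by rewrite eq_sym].
by move=> h _ hi; rewrite /lt3 (nat3 (z := h k)) ?(inj_eq hi) // eq_sym.
Qed.

Definition Cd d a b c :=
  count (fun h => lt3 (mk d h false) a b c) Xs + count (fun h => lt3 (mk d h true) a b c) Xs.

Lemma pos_neq d x y : x != y -> lab d x = lab d y -> pos d x != pos d y.
Proof. by move=> xy e; apply: contraNneq xy => /(labpos_inj e) ->. Qed.

Lemma Cd_eq d a b c : a != b -> b != c -> a != c ->
  Cd d a b c + 2 * lam * (lab d a == lab d c) =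
  2 * lam + lam * (lab d a == lab d b) + lam * (lab d b == lab d c).
Proof.
move=> ab bc ac; rewrite /Cd.
case: (eqVneq (lab d a) (lab d b)) => eab; case: (eqVneq (lab d b) (lab d c)) => ebc.
- have eac : lab d a = lab d c by rewrite eab.
  rewrite eac eqxx /= (@cnt_eq22 _ _ (fun h => lt3 h (pos d a) (pos d b) (pos d c))
     (fun h => lt3 h (pos d c) (pos d b) (pos d a))).
    rewrite !Xc ?pos_neq // 1?eq_sym ?pos_neq //; try lia; by apply/eqP.
  move=> h _ hi; rewrite /lt3 !mk_lt // eab ebc eqxx ltnn /=.
  by rewrite [X in _ + nat_of_bool X = _]andbC.
- have eac : lab d a != lab d c by rewrite eab.
  rewrite (negPf eac) /= (@cnt_eq2 _ _ (fun h => h (lab d b) < h (lab d c))).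
    by rewrite cnt2 //; lia.
  move=> h _ hi; rewrite /lt3 !mk_lt // eab (negPf ebc) eqxx ltnn /= !orbF.
  by rewrite nat2' // (inj_eq hi) pos_neq.
- have eac : lab d a != lab d c by rewrite -ebc.
  rewrite (negPf eac) /= (@cnt_eq2 _ _ (fun h => h (lab d a) < h (lab d b))).
    by rewrite cnt2 //; lia.
  move=> h _ hi; rewrite /lt3 !mk_lt // -ebc (negPf eab) eqxx ltnn /= !orbF.
  by rewrite nat2 // (inj_eq hi) pos_neq.
case: (eqVneq (lab d a) (lab d c)) => eac /=.
  rewrite (@cnt_eq2 _ _ pred0) ?count_pred0; first lia.
  move=> h _ hi; rewrite /lt3 !mk_lt // (negPf eab) (negPf ebc) -eac /= ?andbF ?orbF.
  by case: ltngtP.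
rewrite (@cnt_eq22 _ _ (fun h => lt3 h (lab d a) (lab d b) (lab d c))
     (fun h => lt3 h (lab d a) (lab d b) (lab d c))) ?Xc //; first lia.
by move=> h _ hi; rewrite /lt3 !mk_lt // (negPf eab) (negPf ebc) /= ?andbF ?orbF.
Qed.

Definition Ys := flatten [seq flatten [seq [:: mk d h false; mk d h true] | h <- Xs]
                         | d <- index_enum (option F)].

Lemma count_pairs (T U : Type) (P : pred U) (f g : T -> U) s :
  count P (flatten [seq [:: f x; g x] | x <- s]) = count (P \o f) s + count (P \o g) s.
Proof. elim: s => //= x s ->; lia. Qed.

Lemma geo_sum x y : x != y -> \sum_(d : option F) (lab d x == lab d y : nat) = 1.
Proof.
case/geo => d0 H; rewrite (eq_bigr (fun d => nat_of_bool (d == d0))) => [|d _]; last by rewrite H.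
by rewrite (bigD1 d0) //= eqxx big1 // => d /negPf ->.
Qed.

Lemma plane_psca : psca (2 * #|F|.+1 * lam) Ys.
Proof.
split.
- by rewrite !muln_gt0 l0.
- move=> f /flatten_mapP [d _ /flatten_mapP [h hX]]; rewrite !inE => /orP[]/eqP->;
  by apply: mk_inj; apply: Xinj.
move=> a b c ab bc ac.
rewrite /Ys count_flatten -map_comp sumnE big_map.
rewrite (eq_bigr (fun d => Cd d a b c)) => [|d _]; last by rewrite /= count_pairs.
have H : \sum_(d : option F) (Cd d a b c + 2 * lam * (lab d a == lab d c)) =
  \sum_(d : option F) (2 * lam + lam * (lab d a == lab d b) + lam * (lab d b == lab d c)).
  by apply: eq_bigr => d _; apply: Cd_eq.
rewrite !big_split -!big_distrr !geo_sum // in H.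
move: H; rewrite /Cd big_split ?big1_eq ?sum_nat_const ?card_option => H; apply/eqP; rewrite -(eqn_add2r (2 * lam * 1)) H; apply/eqP => /=; lia.
Qed.
End Plane.

Lemma lam_aux_fuel f1 f2 r : r <= f1 -> r <= f2 -> lam_aux f1 r = lam_aux f2 r.
Proof.
elim: f1 f2 r => [|f1 IH] [|f2] r //=.
- by case: r.
- by case: r.
case: ifP => // r1 h1 h2; congr (_ * _); apply: IH.
  by move: r1 h1 {h2}; case: r => [|[|r]] //=; rewrite uphalf_half; lia.
by move: r1 h2 {h1}; case: r => [|[|r]] //=; rewrite uphalf_half; lia.
Qed.

Lemma lambda_rec r : 2 <= r ->
  lambda_seq r = 2 * (3 ^ uphalf r + 1) * lambda_seq (uphalf r).
Proof.
case: r => [|r] // r2; rewrite {1}/lambda_seq.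
change (lam_aux r.+1 r.+1) with
  (if r.+1 <= 1 then 1 else 2 * (3 ^ uphalf r.+1 + 1) * lam_aux r (uphalf r.+1)).
rewrite leqNgt r2 /=; congr (_ * _); rewrite /lambda_seq; apply: lam_aux_fuel => //.
by case: r r2 => [|r] // _; rewrite /= ltnS uphalf_half; lia.
Qed.

Definition L3 : seq (seq nat) := [:: [:: 0; 1; 2]; [:: 0; 2; 1]; [:: 1; 0; 2];
     [:: 1; 2; 0]; [:: 2; 0; 1]; [:: 2; 1; 0]].

Definition base3 : seq {ffun 'I_3 -> nat} :=
  [seq [ffun i : 'I_3 => nth 0 l i] | l <- L3].

Lemma base3_psca : psca 1 base3.
Proof.
split => //.
  move=> f /mapP [l lL ->] i j; rewrite !ffunE => e; apply: val_inj => /=.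
  have : all (fun l : seq nat => uniq l && (size l == 3)) L3 by [].
  move/allP/(_ l lL).
  by case/andP=> ul /eqP sl; apply/eqP; rewrite -(nth_uniq 0 _ _ ul) ?sl ?e.
move=> a b c ab bc ac; rewrite count_map.
rewrite (eq_count (a2 := fun l => (nth 0 l a < nth 0 l b) && (nth 0 l b < nth 0 l c)));
  last by move=> l; rewrite /lt3 /= !ffunE.
move: ab bc ac; case: a => [[|[|[|?]]] ?]; case: b => [[|[|[|?]]] ?];
  case: c => [[|[|[|?]]] ?] //.
Qed.

Lemma main_ex r : 1 <= r ->
  exists lam (Xs : seq {ffun 'I_(3 ^ r) -> nat}), lam <= lambda_seq r /\ psca lam Xs.
Proof.
elim/ltn_ind: r => r IH r1.
case: (ltngtP r 1) => [|r2|e]; first by rewrite ltnNge r1.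
  have s1 : 1 <= uphalf r by rewrite uphalf_half; lia.
  have sr : uphalf r < r by rewrite uphalf_half; lia.
  have [lam [Xs [lle HX]]] := IH _ sr s1.
  have [F _ cF] := @pPrimePowerField 3 (uphalf r) (isT : prime 3) s1.
  pose g (t : F) : 'I_(3 ^ uphalf r) := cast_ord cF (enum_rank t).
  have ginj : injective g by move=> x y /cast_ord_inj /enum_rank_inj.
  have HF := psca_inj ginj HX.
  have F3 : 2 < #|F| by rewrite cF; apply: (@leq_trans (3 ^ 1)) => //; rewrite leq_exp2l.
  have HP := plane_psca HF F3.
  have le : 3 ^ r <= #|{: F * F}|.
    rewrite card_prod cF -expnD leq_exp2l //; rewrite uphalf_half; lia.
  pose g2 (i : 'I_(3 ^ r)) : F * F := enum_val (widen_ord le i).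
  have g2inj : injective g2 by move=> x y /enum_val_inj /(congr1 val) /= /val_inj.
  eexists; eexists; split; last exact: (psca_inj g2inj HP).
  rewrite lambda_rec ?cF; last lia.
  by rewrite addn1 leq_mul2l lle orbT.
subst r; exists 1, base3; split; last exact: base3_psca.
by [].
Qed.

Theorem lemma3p2 (r : nat) : 1 <= r -> g_le (3 ^ r) 3 (lambda_seq r).
Proof.
move=> r1; have [lam [Xs [le HX]]] := main_ex r1.
by exists lam; split => //; apply: psca_final HX.
Qed.
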